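(* Let $n\ge 1$ and let $\mathcal{S}_n$ be the Shi arrangement in $\mathbb{R}^n$, consisting of the hyperplanes $x_i - x_j = 0$ and $x_i - x_j = 1$ for all $1 \leq i < j \leq n$. The map $\sigma_n$ (defined below) is a bijection between the set of regions of $\mathcal{S}_n$ and the set of parking functions on $[n]$.
   Context: A region of an arrangement is a connected component of the complement of the union of its hyperplanes. A parking function on $[n]=\{1,\ldots,n\}$ is a map $f:[n]\to[n]$ such that for every $1\le j\le n$ the set $f^{-1}(\{1,\ldots,j\})$ has at least $j$ elements. The diagram of a region $R$ of $\mathcal{S}_n$ is defined as follows. Let $w=w_1w_2\cdots w_n$ be the unique permutation of $[n]$ such that $x_{w_1}>x_{w_2}>\cdots>x_{w_n}$ holds on $R$; the position of $m\in[n]$ is the index $p$ with $w_p=m$. For each pair $i<j$ such that $x_i-x_j>1$ holds on $R$, draw an arc from $i$ to $j$ (it goes rightwards in $w$). Then remove every arc that contains another arc: an arc $(i,l)$ is removed if there is a different arc $(j,k)$ with $i$ weakly to the left of $j$ and $k$ weakly to the left of $l$ in $w$. The remaining arcs partition $[n]$ into chains (the connected components under the remaining arcs), each consisting of increasing integers. The map $\sigma_n$ sends $R$ to the function $f:[n]\to[n]$ where $f(i)$ is the position in $w$ of the leftmost element of the chain containing $i$. *)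

(* Defs.v *)
From HB Require Import structures.
From mathcomp Require Import all_boot all_order all_algebra.
From mathcomp Require Import all_classical all_reals all_analysis.
Set Implicit Arguments. Unset Strict Implicit. Unset Printing Implicit Defensive.
Import Order.TTheory GRing.Theory Num.Theory.
Import numFieldTopology.Exports numFieldNormedType.Exports.
Local Open Scope classical_set_scope.
Local Open Scope ring_scope.

(* Conventions: the index set [n] = {1,..,n} is represented by 'I_n, the
   ordinal i : 'I_n standing for the integer i+1 (so the order on indices is
   preserved).  Values of functions [n] -> [n] are natural numbers in 1..n. *)

Section Shi.
Variables (R : realType) (n : nat).

Definition coord (x : 'rV[R]_n) (i : 'I_n) : R := x ord0 i.

Definition shi_complement : set 'rV[R]_n :=
  [set x | forall i j : 'I_n, (i < j)%N ->
     coord x i - coord x j != 0 /\ coord x i - coord x j != 1].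

Definition shi_regions : set (set 'rV[R]_n) :=
  [set connected_component shi_complement x | x in shi_complement].

Definition holds_on (Rg : set 'rV[R]_n) (P : 'rV[R]_n -> Prop) : Prop :=
  forall x, Rg x -> P x.

(* position (1-based) of m in the word w with x_{w_1} > ... > x_{w_n} on Rg:
   one plus the number of k with x_k > x_m on Rg *)
Definition shi_pos (Rg : set 'rV[R]_n) (m : 'I_n) : nat :=
  (#|[set k : 'I_n | `[< holds_on Rg (fun x => coord x m < coord x k) >]]|).+1.

Definition shi_arc (Rg : set 'rV[R]_n) (i j : 'I_n) : bool :=
  (i < j)%N && `[< holds_on Rg (fun x => 1 < coord x i - coord x j) >].

Definition shi_kept_arc (Rg : set 'rV[R]_n) (i l : 'I_n) : bool :=
  shi_arc Rg i l &&
  ~~ [exists j : 'I_n, exists k : 'I_n,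
        [&& shi_arc Rg j k, (j, k) != (i, l),
            (shi_pos Rg i <= shi_pos Rg j)%N & (shi_pos Rg k <= shi_pos Rg l)%N]].

Definition shi_adj (Rg : set 'rV[R]_n) : rel 'I_n :=
  fun a b => shi_kept_arc Rg a b || shi_kept_arc Rg b a.

Definition same_chain (Rg : set 'rV[R]_n) (a b : 'I_n) : bool :=
  connect (shi_adj Rg) a b.

(* sigma_n(Rg)(i) = position of the leftmost element of the chain of i
   (the minimal position among the elements of the chain) *)
Definition sigma_shi (Rg : set 'rV[R]_n) : {ffun 'I_n -> nat} :=
  [ffun i => \big[minn/n.+1]_(c : 'I_n | same_chain Rg i c) shi_pos Rg c].

End Shi.

Definition parking_function (n : nat) (f : {ffun 'I_n -> nat}) : Prop :=
  (forall i, (1 <= f i <= n)%N) /\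
  (forall j : nat, (1 <= j <= n)%N -> (j <= #|[set i : 'I_n | (f i <= j)%N]|)%N).

(* Main.v *)
Require Import Defs.
From HB Require Import structures.
From mathcomp Require Import all_boot all_order all_algebra.
From mathcomp Require Import zify.
Set Implicit Arguments. Unset Strict Implicit. Unset Printing Implicit Defensive.
Import Order.TTheory GRing.Theory Num.Theory.
Local Open Scope ring_scope.


Section Comb.
Variables (R : realFieldType) (n : nat).

Lemma card_le_bij (P : 'I_n -> nat) : injective P -> (forall i, (1 <= P i <= n)%N) ->
  forall j, (j <= n)%N -> #|[set i | (P i <= j)%N]| = j.
Proof.
move=> Pinj Pr.
have Pr' i : ((P i).-1 < n)%N by case/andP: (Pr i); case: (P i).
pose Q i := Ordinal (Pr' i).
have Qinj : injective Q.
  move=> i k /(congr1 val) /= e; apply: Pinj.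
  by case/andP: (Pr i); case/andP: (Pr k); move: e; case: (P i); case: (P k) => //= a b -> .
have Qsurj o : exists i, Q i = o.
  have : o \in codom Q.
    by apply/(@injF_onto _ _ Qinj).
  by case/codomP=> i ->; exists i.
move=> j jn.
have -> : [set i | (P i <= j)%N] = Q @^-1: [set o : 'I_n | (o < j)%N].
  apply/setP=> i; rewrite !inE /=.
  by case/andP: (Pr i); case: (P i).
rewrite card_preimset //.
have -> : [set o : 'I_n | (o < j)%N] = [set (widen_ord jn o) | o in 'I_j].
  apply/setP=> o; rewrite !inE; apply/idP/imsetP.
    by move=> oj; exists (Ordinal oj) => //; apply: val_inj.
  by case=> o' _ ->; rewrite /= ltn_ord.
by rewrite card_imset ?card_ord //; move=> a b /(congr1 val) /= /val_inj.
Qed.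

Variable x : 'I_n -> R.
Hypothesis xinj : injective x.

Definition posx (m : 'I_n) : nat := (#|[set k : 'I_n | x m < x k]|).+1.

Lemma posx_lt a b : (posx a < posx b)%N = (x b < x a).
Proof.
rewrite /posx ltnS.
case: (ltgtP (x b) (x a)) => h.
- apply: proper_card; rewrite properE; apply/andP; split.
    by apply/subsetP=> k; rewrite !inE => /(lt_trans h).
  apply/subsetPn; exists a; rewrite !inE ?h //; by rewrite ltxx.
- apply/negbTE; rewrite -ltnNge ltnS; apply: subset_leq_card.
  by apply/subsetP=> k; rewrite !inE => /(lt_trans h).
- by move: h => /xinj ->; rewrite ltnn.
Qed.

Lemma posx_le a b : (posx a <= posx b)%N = (x b <= x a).
Proof. by rewrite leqNgt posx_lt leNgt. Qed.

Lemma posx_inj : injective posx.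
Proof.
move=> a b e; apply: xinj; apply/eqP; rewrite eq_le -!posx_le e leqnn //.
Qed.

Lemma posx_range i : (1 <= posx i <= n)%N.
Proof.
rewrite /posx ltnS /=.
have : [set k | x i < x k] \subset [set~ i].
  by apply/subsetP=> k; rewrite !inE; apply: contraTneq => ->; rewrite ltxx.
move/subset_leq_card; rewrite cardsC1 card_ord.
move=> H; apply: (leq_ltn_trans H); rewrite ltn_predL.
exact: (leq_ltn_trans (leq0n _) (ltn_ord i)).
Qed.

Lemma card_posx j : (j <= n)%N -> #|[set i | (posx i <= j)%N]| = j.
Proof. by apply: card_le_bij; [exact: posx_inj| exact: posx_range]. Qed.

Lemma posx_onto v : (1 <= v <= n)%N -> exists i, posx i = v.
Proof.
case/andP; case: v => // v _ vn.
have c1 := card_posx vn; have c2 := card_posx (ltnW vn).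
have : ~~ ([set i | (posx i <= v.+1)%N] \subset [set i | (posx i <= v)%N]).
  by apply/negP=> /subset_leq_card; rewrite c1 c2 ltnn.
case/subsetPn=> i; rewrite !inE => h1 h2; exists i.
by apply/eqP; rewrite eqn_leq h1 leqNgt h2.
Qed.

Definition arcx (i j : 'I_n) : bool := (i < j)%N && (1 < x i - x j).

Definition keptx (i l : 'I_n) : bool :=
  arcx i l &&
  ~~ [exists j : 'I_n, exists k : 'I_n,
        [&& arcx j k, (j, k) != (i, l),
            (posx i <= posx j)%N & (posx k <= posx l)%N]].

Definition adjx : rel 'I_n := fun a b => keptx a b || keptx b a.
Definition chainx (a b : 'I_n) : bool := connect adjx a b.
Definition sigx : {ffun 'I_n -> nat} :=
  [ffun i => \big[minn/n.+1]_(c : 'I_n | chainx i c) posx c].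

Lemma arcx_lt i j : arcx i j -> (i < j)%N /\ (x j < x i).
Proof.
case/andP=> -> h; split => //.
by rewrite -subr_gt0; apply: lt_trans h.
Qed.

Lemma keptx_arc i j : keptx i j -> arcx i j.
Proof. by case/andP. Qed.

Lemma keptxP i l j k : keptx i l -> arcx j k -> (j, k) != (i, l) ->
  (posx i <= posx j)%N -> (posx k <= posx l)%N -> False.
Proof.
case/andP=> _ /negP h a d l1 l2; apply: h.
by apply/existsP; exists j; apply/existsP; exists k; rewrite a d l1 l2.
Qed.

Lemma kept_out c d d' : keptx c d -> keptx c d' -> d = d'.
Proof.
move=> k1 k2; apply/eqP/negP=> /negP ne.
have ne1 : (c, d') != (c, d) by apply: contra ne => /eqP [->].
have ne2 : (c, d) != (c, d') by apply: contra ne => /eqP [->].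
case: (leqP (posx d') (posx d)) => h.
  by apply: (keptxP k1 (keptx_arc k2) ne1 (leqnn _) h).
by apply: (keptxP k2 (keptx_arc k1) ne2 (leqnn _) (ltnW h)).
Qed.

Lemma kept_in c c' d : keptx c d -> keptx c' d -> c = c'.
Proof.
move=> k1 k2; apply/eqP/negP=> /negP ne.
have ne1 : (c', d) != (c, d) by apply: contra ne => /eqP [->].
have ne2 : (c, d) != (c', d) by apply: contra ne => /eqP [->].
case: (leqP (posx c) (posx c')) => h.
  by apply: (keptxP k1 (keptx_arc k2) ne1 h (leqnn _)).
by apply: (keptxP k2 (keptx_arc k1) ne2 (ltnW h) (leqnn _)).
Qed.

Lemma kept_nonnest c d c' d' : keptx c d -> keptx c' d' ->
  (posx c < posx c')%N -> (posx d < posx d')%N.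
Proof.
move=> k1 k2 h; rewrite ltnNge; apply/negP => h2.
have ne : (c', d') != (c, d).
  by apply/negP=> /eqP [e _]; rewrite e ltnn in h.
exact: (keptxP k1 (keptx_arc k2) ne (ltnW h) h2).
Qed.

Lemma kept_nonnestE c d c' d' : keptx c d -> keptx c' d' ->
  (posx c < posx c')%N = (posx d < posx d')%N.
Proof.
move=> k1 k2; apply/idP/idP; first exact: kept_nonnest.
move=> h; case: (ltngtP (posx c) (posx c')) => // h2.
  by have := kept_nonnest k2 k1 h2; rewrite ltnNge (ltnW h).
move/posx_inj: h2 => e; rewrite e in k1.
by rewrite (kept_out k1 k2) ltnn in h.
Qed.

Definition reachx := connect keptx.

Lemma reach_le a b : reachx a b -> (a <= b)%N /\ (x b <= x a).
Proof.
case/connectP=> p; elim: p a => [|c p IH] a /=; first by move=> _ ->.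
case/andP=> k pth e; case: (IH c pth e) => h1 h2.
case: (arcx_lt (keptx_arc k)) => h3 h4; split.
  exact: leq_trans (ltnW h3) h1.
exact: le_trans h2 (ltW h4).
Qed.

Lemma connect_last (T : finType) (e : rel T) a c : connect e a c -> a != c ->
  exists2 d, connect e a d & e d c.
Proof.
case/connectP=> p; elim/last_ind: p => [|p z _]; first by move=> _ -> /eqP.
rewrite rcons_path last_rcons => /andP [pth ez] -> _.
by exists (last a p) => //; apply/connectP; exists p.
Qed.

Lemma connect_first (T : finType) (e : rel T) a c : connect e a c -> a != c ->
  exists2 d, e a d & connect e d c.
Proof.
case/connectP=> [[|z p]]; first by move=> _ -> /eqP.
move=> /= /andP [ez pth] -> _; exists z => //; apply/connectP; exists p => //.
Qed.

Lemma adjx_sym : symmetric adjx.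
Proof. by move=> a b; rewrite /adjx orbC. Qed.

Lemma chainx_sym a b : chainx a b = chainx b a.
Proof. exact: (sym_connect_sym adjx_sym). Qed.

Lemma chainx_trans a b c : chainx a b -> chainx b c -> chainx a c.
Proof. exact: connect_trans. Qed.

Lemma reach_chain a b : reachx a b -> chainx a b.
Proof.
apply: connect_sub => u v k; apply: connect1; by rewrite /adjx k.
Qed.

Lemma chain_reach a b : chainx a b -> reachx a b \/ reachx b a.
Proof.
case/connectP=> p; elim/last_ind: p b => [|p z IH] b.
  by move=> _ ->; left; exact: connect0.
rewrite rcons_path last_rcons => /andP [pth az] ->.
case: (IH _ pth erefl) => [r|r]; set c := last a p in r az *.
- case/orP: az => k.
    by left; apply: connect_trans r (connect1 k).
  case: (eqVneq a c) => [ac|ac].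
    by right; rewrite ac; apply: connect1.
  case: (connect_last r ac) => e r1 k2.
  by rewrite (kept_in k k2); left.
- case/orP: az => k; last by right; apply: connect_trans (connect1 k) r.
  case: (eqVneq c a) => [ac|ac].
    by left; rewrite -ac; apply: connect1.
  case: (connect_first r ac) => e k2 r1.
  by rewrite (kept_out k k2); right.
Qed.

Lemma bigmin_le (T : finType) (P : pred T) (F : T -> nat) (d : nat) h :
  P h -> (\big[minn/d]_(c | P c) F c <= F h)%N.
Proof.
move=> Ph; rewrite -big_filter.
have : h \in [seq c <- index_enum T | P c] by rewrite mem_filter Ph mem_index_enum.
elim: [seq c <- index_enum T | P c] => //= a s IH.
rewrite in_cons big_cons; case/orP => [/eqP->|/IH H]; first exact: geq_minl.
by rewrite geq_min H orbT.
Qed.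

Definition headx (a : 'I_n) := [forall c, ~~ keptx c a].

Lemma head_min i h : chainx i h -> headx h ->
  forall c, chainx i c -> (posx h <= posx c)%N.
Proof.
move=> ih hh c ic.
have hc : chainx h c by apply: chainx_trans ic; rewrite chainx_sym.
case: (chain_reach hc) => r.
  by rewrite posx_le; case: (reach_le r).
case: (eqVneq c h) => [->//|ne].
case: (connect_last r ne) => e _ k.
by move/forallP: hh => /(_ e); rewrite k.
Qed.

Lemma sigx_head i h : chainx i h -> headx h -> sigx i = posx h.
Proof.
move=> ih hh; rewrite ffunE.
apply/eqP; rewrite eqn_leq; apply/andP; split.
  exact: bigmin_le.
apply: (big_ind (fun m => posx h <= m)%N).
- by case/andP: (posx_range h) => _ /leqW.
- by move=> u v h1 h2; rewrite leq_min h1 h2.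
- by move=> c ic; apply: head_min ih hh c ic.
Qed.

Definition hdx (i : 'I_n) : 'I_n := [arg min_(c < i | chainx i c) (c : nat)].

Lemma hdxP i : chainx i (hdx i) /\ headx (hdx i).
Proof.
rewrite /hdx; case: arg_minnP; first exact: connect0.
move=> h ih hmin; split => //.
apply/forallP=> c; apply/negP=> k.
have ic : chainx i c.
  apply: chainx_trans ih _; apply: connect1; by rewrite /adjx k orbT.
have := hmin c ic; rewrite leqNgt; case: (arcx_lt (keptx_arc k)) => -> //.
Qed.

Lemma sigx_hd i : sigx i = posx (hdx i).
Proof. by case: (hdxP i) => h1 h2; apply: sigx_head. Qed.

Lemma sigx_chain a b : (sigx a == sigx b) = chainx a b.
Proof.
apply/eqP/idP.
  rewrite !sigx_hd => /posx_inj e.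
  case: (hdxP a) (hdxP b) => a1 _ [b1 _].
  by apply: chainx_trans a1 _; rewrite e chainx_sym.
move=> ab; rewrite !ffunE; apply: eq_bigl => c.
apply/idP/idP; first by apply: chainx_trans; rewrite chainx_sym.
exact: chainx_trans.
Qed.

Lemma sigx_range i : (1 <= sigx i <= n)%N.
Proof. by rewrite sigx_hd posx_range. Qed.

Lemma sigx_le_pos i : (sigx i <= posx i)%N.
Proof.
case: (hdxP i) => h1 h2; rewrite sigx_hd; apply: head_min h1 h2 _ _.
exact: connect0.
Qed.

Lemma sigx_pf : (forall i, (1 <= sigx i <= n)%N) /\
  (forall j : nat, (1 <= j <= n)%N -> (j <= #|[set i : 'I_n | (sigx i <= j)%N]|)%N).
Proof.
split; first exact: sigx_range.
move=> j /andP [_ jn]; rewrite -{1}(card_posx jn); apply: subset_leq_card.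
by apply/subsetP=> i; rewrite !inE => /(leq_trans (sigx_le_pos i)).
Qed.

Lemma kept_sig c d : keptx c d =
  [&& sigx c == sigx d, (c < d)%N &
      [forall e, (sigx e == sigx d) ==> ~~ ((c < e)%N && (e < d)%N)]].
Proof.
apply/idP/idP.
- move=> k; have cd : chainx c d by apply: connect1; rewrite /adjx k.
  case: (arcx_lt (keptx_arc k)) => lcd _.
  rewrite sigx_chain cd lcd /=; apply/forallP=> e; apply/implyP.
  rewrite sigx_chain => ed; apply/negP=> /andP [ce ed'].
  have ce' : chainx c e by apply: chainx_trans cd _; rewrite chainx_sym.
  case: (chain_reach ce') => r; last first.
    by case: (reach_le r) => h _; move: (leq_ltn_trans h ce); rewrite ltnn.
  case: (chain_reach ed) => r2; last first.
    by case: (reach_le r2) => h _; move: (leq_ltn_trans h ed'); rewrite ltnn.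
  have ne : e != d by rewrite neq_ltn ed'.
  case: (connect_last r2 ne) => e' r3 k2.
  move: (kept_in k k2) => ce2; rewrite -ce2 in r3.
  by case: (reach_le r3) => h _; move: (leq_ltn_trans h ce); rewrite ltnn.
- case/and3P; rewrite sigx_chain => cd lcd /forallP H.
  case: (chain_reach cd) => r; last first.
    by case: (reach_le r) => h _; move: (leq_ltn_trans h lcd); rewrite ltnn.
  have ne : c != d by rewrite neq_ltn lcd.
  case: (connect_last r ne) => e r2 k.
  case: (eqVneq e c) => [<-//|ne2].
  case: (reach_le r2) => h1 _.
  have ce : (c < e)%N by rewrite ltn_neqAle eq_sym ne2 h1.
  case: (arcx_lt (keptx_arc k)) => ed _.
  have := H e; rewrite ce ed /= sigx_chain.
  have -> // : chainx e d by apply: connect1; rewrite /adjx k.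
Qed.

Lemma arcx_kept i j : arcx i j =
  (i < j)%N && [exists c, exists d, [&& keptx c d, (posx i <= posx c)%N & (posx d <= posx j)%N]].
Proof.
apply/idP/idP.
- move=> a; rewrite (arcx_lt a).1 /=.
  pose P (cd : 'I_n * 'I_n) := [&& arcx cd.1 cd.2, (posx i <= posx cd.1)%N & (posx cd.2 <= posx j)%N].
  have P0 : P (i, j) by rewrite /P /= a !leqnn.
  case: (arg_minnP (fun cd => posx cd.2 - posx cd.1)%N P0) => [[c d]] /and3P [acd l1 l2] hmin.
  apply/existsP; exists c; apply/existsP; exists d; rewrite l1 l2 andbT.
  rewrite /keptx acd /= andbT; apply/negP; case/existsP=> j'; case/existsP=> k'; case/and4P=> a2 ne m1 m2.
  have P2 : P (j', k') by rewrite /P /= a2 (leq_trans l1 m1) (leq_trans m2 l2).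
  have := hmin _ P2; rewrite /=.
  case: (arcx_lt a2) => _; rewrite -posx_lt => q1.
  case: (arcx_lt acd) => _; rewrite -posx_lt => q2.
  have : (posx c < posx j')%N || (posx k' < posx d)%N.
    case: (ltngtP (posx c) (posx j')) => // e1; first by rewrite ltnNge m1 in e1.
    case: (ltngtP (posx k') (posx d)) => // e2; first by rewrite ltnNge m2 in e2.
    by move: ne; rewrite (posx_inj e1) (posx_inj e2) eqxx.
  move=> H1 H2; move: H1; lia.
- case/andP=> lij /existsP [c /existsP [d /and3P [k l1 l2]]].
  rewrite /arcx lij /=.
  case/andP: (keptx_arc k) => _ h.
  rewrite posx_le in l1; rewrite posx_le in l2.
  apply: (lt_le_trans h); rewrite lerD // lerN2 //.
Qed.

End Comb.


Section Uniq.
Variables (R : realFieldType) (n : nat) (x1 x2 : 'I_n -> R).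
Hypotheses (inj1 : injective x1) (inj2 : injective x2).
Hypothesis sE : sigx x1 = sigx x2.

Lemma keptE c d : keptx x1 c d = keptx x2 c d.
Proof. by rewrite (kept_sig inj1) (kept_sig inj2) sE. Qed.

Lemma not_head (x : 'I_n -> R) a : ~~ headx x a -> exists e, keptx x e a.
Proof. by case/forallPn=> e; rewrite negbK => k; exists e. Qed.

Lemma pos_unique : posx x1 =1 posx x2.
Proof.
suff H : forall p a, (posx x1 a <= p)%N -> posx x2 a = posx x1 a.
  by move=> a; rewrite (H _ a (leqnn _)).
elim=> [|p IH] a ap.
  by case/andP: (posx_range x1 a) => h _; move: (leq_trans h ap).
case: (ltnP (posx x1 a) p.+1) => [lt|ge]; first exact: IH.
have qa : posx x1 a = p.+1 by apply/eqP; rewrite eqn_leq ap ge.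
have back b : (posx x2 b < p.+1)%N -> posx x1 b = posx x2 b.
  move=> lb; case/andP: (posx_range x2 b) => b1 bn.
  have [a' ea'] := posx_onto inj1 (posx_range x2 b).
  have e1 : posx x2 a' = posx x1 a' by apply: IH; rewrite ea' -ltnS.
  rewrite ea' in e1; have e2 := posx_inj inj2 e1.
  by rewrite -e2 ea' e2.
apply/eqP/negP => /negP ne.
have ga : (p.+1 < posx x2 a)%N.
  rewrite ltn_neqAle eq_sym -qa ne /= leqNgt; apply/negP => h.
  rewrite qa in h.
  by move: (back a h) ne; rewrite qa => ->; rewrite eqxx.
have [b eb] : exists b, posx x2 b = p.+1.
  by apply: (posx_onto inj2); rewrite -qa posx_range.
have gb : (p.+1 < posx x1 b)%N.
  rewrite ltnNge leq_eqVlt negb_or; apply/andP; split.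
    apply/negP=> /eqP e0; have e := posx_inj inj1 (etrans e0 (esym qa)).
    by move: ne; rewrite -e eb e0 eqxx.
  apply/negP=> h; have := IH b; rewrite -ltnS h => /(_ isT).
  by rewrite eb => e; rewrite e ltnn in h.
have nha : ~~ headx x1 a.
  apply/negP=> h1.
  have h2 : headx x2 a.
    apply/forallP=> c; rewrite -keptE; exact: (forallP h1 c).
  have := sigx_head inj1 (connect0 _ a) h1.
  rewrite sE (sigx_head inj2 (connect0 _ a) h2) qa => e.
  by rewrite e ltnn in ga.
have nhb : ~~ headx x2 b.
  apply/negP=> h2.
  have h1 : headx x1 b.
    apply/forallP=> c; rewrite keptE; exact: (forallP h2 c).
  have := sigx_head inj1 (connect0 _ b) h1.
  rewrite sE (sigx_head inj2 (connect0 _ b) h2) eb => e.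
  by rewrite e ltnn in gb.
case: (not_head nha) => e ke1.
case: (not_head nhb) => c kc2.
have ke2 := ke1; rewrite keptE in ke2.
have kc1 := kc2; rewrite -keptE in kc1.
have pe : posx x2 e = posx x1 e.
  apply: IH; rewrite -ltnS -qa posx_lt //.
  by case: (arcx_lt (keptx_arc ke1)).
have pc : posx x1 c = posx x2 c.
  apply: back; rewrite -eb posx_lt //.
  by case: (arcx_lt (keptx_arc kc2)).
have h1 := kept_nonnestE inj1 ke1 kc1; rewrite qa gb in h1.
have h2 := kept_nonnestE inj2 kc2 ke2; rewrite eb ga pe -pc in h2.
by move: h1 h2; lia.
Qed.

Lemma lt_same m k : (x1 m < x1 k) = (x2 m < x2 k).
Proof. by rewrite -(posx_lt inj1) -(posx_lt inj2) !pos_unique. Qed.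

Lemma arc_same i j : arcx x1 i j = arcx x2 i j.
Proof.
rewrite (arcx_kept inj1) (arcx_kept inj2); congr (_ && _).
apply: eq_existsb => c; apply: eq_existsb => d.
by rewrite keptE !pos_unique.
Qed.

End Uniq.

Local Close Scope ring_scope.


Section Surj.
Variables (n : nat) (f : 'I_n -> nat).
Hypothesis pf1 : forall i, 1 <= f i <= n.
Hypothesis pf2 : forall j, 1 <= j <= n -> j <= #|[set i | f i <= j]|.

Definition Hf (a : 'I_n) := [forall b, (f b == f a) ==> (a <= b)].
Definition isPred (c d : 'I_n) :=
  [&& f c == f d, c < d & [forall e, (f e == f d) ==> ~~ ((c < e) && (e < d))]].
Definition predf (d : 'I_n) : 'I_n := odflt d [pick c | isPred c d].
Definition img v := [exists a, f a == v].

Lemma nonhead_pred d : ~~ Hf d -> isPred (predf d) d.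
Proof.
case/forallPn=> b; rewrite negb_imply -ltnNge => /andP [fb bd].
have P0 : (f b == f d) && (b < d) by rewrite fb bd.
case: (@arg_maxnP _ b (fun c => (f c == f d) && (c < d)) (fun c : 'I_n => (c : nat)) P0) => c /andP [fc cd] cmax.
have ic : isPred c d.
  rewrite /isPred fc cd /=; apply/forallP=> e; apply/implyP=> fe.
  apply/negP=> /andP [ce ed]; have := cmax e; rewrite fe ed => /(_ isT) /=.
  by rewrite leqNgt ce.
rewrite /predf; case: pickP => [c' //|/(_ c)]; by rewrite ic.
Qed.

Lemma isPred_inj c d d' : isPred c d -> isPred c d' -> d = d'.
Proof.
move=> /and3P [/eqP f1 l1 /forallP h1] /and3P [/eqP f2 l2 /forallP h2].
apply/eqP; case: (ltngtP d d') => [lt|lt|/val_inj -> //].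
  by have := h2 d; rewrite -f2 f1 eqxx l1 lt.
by have := h1 d'; rewrite -f1 f2 eqxx l2 lt.
Qed.

Lemma head_unique a b : Hf a -> Hf b -> f a = f b -> a = b.
Proof.
move=> /forallP ha /forallP hb e; apply/val_inj/eqP; rewrite eqn_leq.
by have := implyP (ha b); have := implyP (hb a); rewrite e eqxx => -> // ->.
Qed.

Lemma head_exists a : exists2 h, Hf h & f h = f a.
Proof.
have P0 : f a == f a by [].
case: (@arg_minnP _ a (fun c => f c == f a) (fun c : 'I_n => (c : nat)) P0) => h /eqP fh hmin.
exists h => //; apply/forallP=> b; apply/implyP; rewrite fh => /eqP e.
by apply: hmin; rewrite e.
Qed.

Lemma index_rcons_in (T : eqType) (s : seq T) c y : y \in s -> index y (rcons s c) = index y s.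
Proof. by move=> ys; rewrite -cats1 index_cat ys. Qed.

Lemma index_rcons_new (T : eqType) (s : seq T) c : c \notin s -> index c (rcons s c) = size s.
Proof. by move=> cs; rewrite -cats1 index_cat (negbTE cs) /= eqxx addn0. Qed.

Lemma index_rcons_lt (T : eqType) (s : seq T) c y : index y (rcons s c) < size s -> y \in s.
Proof. by rewrite -cats1 index_cat; case: ifP => // _; rewrite ltnNge leq_addr. Qed.

Definition Inv (s : seq 'I_n) :=
  uniq s /\ forall a, a \in s ->
  [/\ f a <= (index a s).+1,
      img (index a s).+1 -> Hf a /\ f a = (index a s).+1 &
      ~~ img (index a s).+1 ->
        [/\ ~~ Hf a, index (predf a) s < index a s &
            forall b, ~~ Hf b -> index a s < index b s -> index (predf b) s < index a s ->
              index (predf a) s < index (predf b) s]].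

Lemma Inv_nil : Inv [::].
Proof. by split. Qed.

Lemma Inv_ext s : Inv s -> size s < n -> exists c, Inv (rcons s c).
Proof.
move=> [us H] sn; set q := size s.
have old a c : a \in s -> c \notin s -> Inv (rcons s c) -> True by [].
have pres c : c \notin s -> forall a, a \in s ->
  [/\ f a <= (index a (rcons s c)).+1,
      img (index a (rcons s c)).+1 -> Hf a /\ f a = (index a (rcons s c)).+1 &
      ~~ img (index a (rcons s c)).+1 ->
        [/\ ~~ Hf a, index (predf a) (rcons s c) < index a (rcons s c) &
            forall b, ~~ Hf b -> index a (rcons s c) < index b (rcons s c) ->
              index (predf b) (rcons s c) < index a (rcons s c) ->
              index (predf a) (rcons s c) < index (predf b) (rcons s c)]].
  move=> cs a aS; rewrite (index_rcons_in _ aS).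
  have [h1 h2 h3] := H a aS; split => // ni.
  have [h4 h5 h6] := h3 ni.
  have pas : predf a \in s by rewrite -index_mem (ltn_trans h5) // index_mem.
  rewrite (index_rcons_in _ pas); split => // b nb lb lpb.
  have pbs : predf b \in s.
    by apply: (index_rcons_lt (c := c)); apply: (ltn_trans lpb); rewrite index_mem.
  rewrite (index_rcons_in _ pbs) in lpb *.
  apply: h6 => //.
  case: (boolP (b \in s)) => bs; first by rewrite (index_rcons_in _ bs) in lb.
  by rewrite (memNindex bs) index_mem.
case: (boolP (img q.+1)) => iq.
- case/existsP: iq => a0 /eqP fa0.
  case: (head_exists a0) => c hc fc; rewrite fa0 in fc.
  have cs : c \notin s.
    apply/negP=> cs; have [h1 h2 h3] := H c cs.
    case: (boolP (img (index c s).+1)) => ii.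
      case: (h2 ii) => _; rewrite fc => /eqP; rewrite eqSS => /eqP e.
      by move: (index_mem c s); rewrite cs -/q e ltnn.
    by case: (h3 ii) => /negP.
  exists c; split; first by rewrite rcons_uniq cs us.
  move=> a; rewrite mem_rcons in_cons; case/orP => [/eqP ->|aS]; last exact: pres.
  rewrite index_rcons_new // -/q fc; split => //.
  by move=> /negP []; apply/existsP; exists a0; rewrite fa0.
-
  have Sb : exists b, (f b <= q) && (b \notin s).
    have qn : 1 <= q.+1 <= n by rewrite sn.
    have := pf2 qn.
    have -> : [set i | f i <= q.+1] = [set i | f i <= q].
      apply/setP=> i; rewrite !inE leq_eqVlt ltnS; case: eqP => // e.
      by move/negP: iq; case; apply/existsP; exists i; rewrite e.
    move=> cq; apply/existsP; apply: contraTT cq; rewrite negb_exists => /forallP nb.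
    rewrite -ltnNge ltnS.
    apply: (@leq_trans #|[set i in s]|); last by rewrite cardsE (card_uniqP us).
    apply: subset_leq_card; apply/subsetP=> i; rewrite !inE => fi.
    by have := nb i; rewrite fi /= negbK.
  case: Sb => b0 P0.
  case: (@arg_minnP _ b0 (fun c => (f c <= q) && (c \notin s)) (fun c : 'I_n => (c : nat)) P0) => b /andP [fb bs] bmin.
  have nhb : ~~ Hf b.
    apply/negP=> hb.
    have t1 : (f b).-1 < size s.
      by case/andP: (pf1 b); move: fb; rewrite /q; case: (f b).
    set e := nth b s (f b).-1.
    have es : e \in s by apply: mem_nth.
    have ie : index e s = (f b).-1 by apply: index_uniq.
    have [_ h2 _] := H e es.
    have ii : img (index e s).+1.
      apply/existsP; exists b; rewrite ie prednK //.
      by case/andP: (pf1 b).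
    case: (h2 ii) => he fe.
    have fe' : f e = f b by rewrite fe ie prednK //; case/andP: (pf1 b).
    by move: bs; rewrite -(head_unique he hb fe') es.
  have ipb := nonhead_pred nhb.
  case/and3P: (ipb) => /eqP fpb lpb _.
  have pbs : predf b \in s.
    apply/negP=> /negP pns; have := bmin (predf b); rewrite fpb fb pns /=.
    by move/(_ isT); rewrite leqNgt lpb.
  have Q0 : [&& ~~ Hf b, b \notin s & predf b \in s] by rewrite nhb bs pbs.
  case: (@arg_minnP _ b (fun c => [&& ~~ Hf c, c \notin s & predf c \in s]) (fun c => index (predf c) s) Q0) => c /and3P [nhc cs pcs] cmin.
  exists c; split; first by rewrite rcons_uniq cs us.
  move=> a; rewrite mem_rcons in_cons; case/orP => [/eqP ->|aS]; last exact: pres.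
  rewrite index_rcons_new // -/q (index_rcons_in _ pcs).
  have [h1 _ _] := H _ pcs.
  have ipc := nonhead_pred nhc; case/and3P: (ipc) => /eqP fpc _ _.
  split => //.
  + by rewrite -fpc (leq_trans h1) // ltnS ltnW // index_mem.
  + by move=> ii; rewrite ii in iq.
  + move=> _; split => //; first by rewrite index_mem.
    move=> b' nb' lb' lpb'.
    have pb's : predf b' \in s by apply: (index_rcons_lt (c := c)).
    rewrite (index_rcons_in _ pb's) in lpb' *.
    have b'ns : b' \notin s.
      apply/negP=> b's; move: lb'; rewrite (index_rcons_in _ b's) ltnNge.
      by rewrite ltnW // index_mem.
    have b'c : b' != c.
      by apply/negP=> /eqP e; move: lb'; rewrite e index_rcons_new // ltnn.
    have := cmin b'; rewrite nb' b'ns pb's => /(_ isT).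
    rewrite leq_eqVlt; case/orP => // /eqP e.
    have e2 := index_inj c pcs pb's e.
    have ipb' := nonhead_pred nb'.
    rewrite e2 in ipc; have e3 := isPred_inj ipc ipb'.
    by move: b'c; rewrite e3 eqxx.
Qed.

Lemma Inv_exists k : k <= n -> exists s, size s = k /\ Inv s.
Proof.
elim: k => [|k IH] kn; first by exists [::]; split => //; exact: Inv_nil.
case: (IH (ltnW kn)) => s [sk iS].
case: (Inv_ext iS) => [|c ic]; first by rewrite sk.
by exists (rcons s c); rewrite size_rcons sk.
Qed.

Lemma P_exists : exists P : 'I_n -> nat,
  [/\ injective P, forall i, 1 <= P i <= n,
      forall a, Hf a -> P a = f a,
      forall a, ~~ Hf a -> P (predf a) < P a &
      forall a b, ~~ Hf a -> ~~ Hf b -> P (predf a) < P (predf b) -> P a < P b].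
Proof.
case: (Inv_exists (leqnn n)) => s [sn [us H]].
have alls a : a \in s.
  case: (boolP (a \in s)) => // ans; exfalso.
  have : #|[set i in s]| <= #|[set~ a]|.
    apply: subset_leq_card; apply/subsetP=> i; rewrite !inE.
    by apply: contraTneq => ->.
  rewrite cardsE (card_uniqP us) cardsC1 card_ord sn.
  by rewrite -subn1; have := ltn_ord a; lia.
have nhC a : ~~ Hf a -> ~~ img (index a s).+1.
  move=> nh; apply/negP=> ii; have [_ h2 _] := H a (alls a).
  by case: (h2 ii) => h; rewrite h in nh.
exists (fun a => (index a s).+1); split.
- by move=> a b /eqP; rewrite eqSS => /eqP /(index_inj a (alls a) (alls b)).
- by move=> i /=; have := alls i; rewrite -index_mem sn.
- move=> a ha; have [_ h2 h3] := H a (alls a).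
  case: (boolP (img (index a s).+1)) => ii; first by case: (h2 ii).
  by case: (h3 ii); rewrite ha.
- move=> a nh; have [_ _ h3] := H a (alls a).
  by case: (h3 (nhC a nh)).
- move=> a b na nb; rewrite !ltnS => lp.
  rewrite ltnNge leq_eqVlt negb_or; apply/andP; split.
    by apply/negP=> /eqP /(index_inj a (alls b) (alls a)) e; rewrite e ltnn in lp.
  apply/negP=> lba.
  have [_ _ h3] := H b (alls b).
  case: (h3 (nhC b nb)) => _ pb hb.
  have := hb a na lba (ltn_trans lp pb).
  by rewrite ltnNge (ltnW lp).
Qed.
End Surj.

Local Open Scope ring_scope.


Section Real.
Variable R : realFieldType.

Lemma seq_max (s : seq R) : s != [::] -> exists2 M, M \in s & forall l, l \in s -> l <= M.
Proof.
elim: s => // a [|b s] IH _.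
  exists a; first by rewrite mem_seq1.
  by move=> l; rewrite mem_seq1 => /eqP ->.
case: IH => // M Ms HM.
exists (Num.max a M).
  by rewrite /Num.max; case: ifP => _; rewrite in_cons ?eqxx ?Ms ?orbT.
move=> l; rewrite in_cons => /orP [/eqP ->|/HM lM]; first by rewrite le_max lexx.
by rewrite le_max lM orbT.
Qed.

Lemma seq_min (s : seq R) : s != [::] -> exists2 M, M \in s & forall l, l \in s -> M <= l.
Proof.
move=> s0; case: (seq_max (s := [seq - l | l <- s])); first by case: s s0.
move=> M /mapP [m ms ->] H; exists m => // l ls.
by rewrite -lerN2; apply: H; apply/mapP; exists l.
Qed.

Lemma between (ls hs : seq R) : ls != [::] ->
  (forall l h, l \in ls -> h \in hs -> l < h) ->
  exists v, (forall l, l \in ls -> l < v) /\ (forall h, h \in hs -> v < h).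
Proof.
move=> ls0 H; case: (seq_max ls0) => M Ms HM.
case: (eqVneq hs [::]) => [->|hs0].
  exists (M + 1); split => // l /HM lM.
  by apply: (le_lt_trans lM); rewrite ltrDl ltr01.
case: (seq_min hs0) => m ms Hm.
have Mm : M < m by apply: H.
exists ((M + m) / 2); split.
  by move=> l /HM lM; apply: (le_lt_trans lM); rewrite midf_lt.
by move=> h /Hm mh; apply: (lt_le_trans _ mh); rewrite midf_lt.
Qed.

Lemma realize (n : nat) (U : nat -> nat -> bool) :
  (forall p q p' q', U p q -> (p' <= p)%N -> (q <= q')%N -> U p' q') ->
  exists y : nat -> R, forall p q, (p < q)%N -> (q <= n)%N ->
    y q < y p /\ (U p q -> 1 < y p - y q) /\ (~~ U p q -> y p - y q < 1).
Proof.
move=> Uup.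
suff H : forall k, exists y : nat -> R, forall p q, (n - k <= p)%N -> (p < q)%N -> (q <= n)%N ->
    y q < y p /\ (U p q -> 1 < y p - y q) /\ (~~ U p q -> y p - y q < 1).
  by case: (H n) => y Hy; exists y => p q; apply: Hy; rewrite subnn.
elim=> [|k [y IH]].
  exists (fun _ => 0); move=> p q; rewrite subn0 => np pq qn; exfalso; lia.
case: (leqP n k) => kn.
  exists y => p q h; apply: IH; move: h kn; lia.
set m := (n - k.+1)%N.
have m1 : (m.+1 = n - k)%N by rewrite /m; lia.
pose qs := iota m.+1 (n - m).
have qsP q : (q \in qs) = (m < q <= n)%N.
  by rewrite mem_iota; apply/idP/idP; move=> h; move: h; rewrite /m; lia.
pose ls := y m.+1 :: [seq y q + 1 | q <- qs & U m q].
pose hs := [seq y q + 1 | q <- qs & ~~ U m q].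
have IH' p q : (m < p)%N -> (p < q)%N -> (q <= n)%N -> y q < y p /\ (U p q -> 1 < y p - y q) /\ (~~ U p q -> y p - y q < 1).
  by move=> mp; apply: IH; rewrite -m1.
have Hlh l h : l \in ls -> h \in hs -> l < h.
  move=> lls /mapP [q']; rewrite mem_filter qsP => /andP [nU /andP [mq' q'n]] ->.
  move: lls; rewrite in_cons => /orP [/eqP ->|].
    case: (ltngtP m.+1 q') => [lt|//|<-]; last by rewrite ltrDl ltr01.
    + case: (IH' _ _ (ltnSn m) lt q'n) => _ [_ hh]; rewrite -ltrBlDl; apply: hh.
      by apply: contra nU => u; apply: Uup u _ _.
    + by move: mq'; rewrite ltnNge => /negP.
  case/mapP => q; rewrite mem_filter qsP => /andP [u /andP [mq qn]] ->.
  rewrite ltrD2r; case: (ltngtP q' q) => [lt|lt|e].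
  - by case: (IH' _ _ mq' lt qn).
  - by move: nU; rewrite (Uup _ _ _ _ u (leqnn _) (ltnW lt)).
  - by move: nU; rewrite e u.
case: (between (ls := ls) (hs := hs) isT Hlh) => v [Hl Hh].
exists (fun p => if p == m then v else y p) => p q mp pq qn.
have qm : (q == m) = false by apply/negbTE; move: mp pq; rewrite /m; lia.
rewrite qm; case: eqP => [pm|/eqP pm].
- rewrite pm in pq; have qq : q \in qs by rewrite qsP pq qn.
  split; last split.
  + case: (ltngtP m.+1 q) => [lt|lt|<-]; last by apply: Hl; rewrite in_cons eqxx.
    * case: (IH' _ _ (ltnSn m) lt qn) => h _; apply: lt_trans h _.
      by apply: Hl; rewrite in_cons eqxx.
    * by move: pq; rewrite ltnNge => /negP; rewrite -ltnS.
  + move=> u; rewrite pm in u; rewrite ltrBrDl; apply: Hl.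
    by rewrite in_cons; apply/orP; right; apply/mapP; exists q; rewrite // mem_filter u qq.
  + move=> u; rewrite pm in u; rewrite ltrBlDl; apply: Hh.
    by apply/mapP; exists q; rewrite // mem_filter u qq.
- apply: IH' => //; move: mp pm; rewrite /m; lia.
Qed.
End Real.


Section Verif.
Variables (R : realFieldType) (n : nat) (f : 'I_n -> nat).
Hypothesis pf1 : forall i, (1 <= f i <= n)%N.
Hypothesis pf2 : forall j, (1 <= j <= n)%N -> (j <= #|[set i | (f i <= j)%N]|)%N.

Lemma surj_point : exists x : 'I_n -> R,
  [/\ injective x, (forall u v : 'I_n, (u < v)%N -> x u - x v != 1) &
      forall i, sigx x i = f i].
Proof.
case: (P_exists pf1 pf2) => P [Pinj Pr P1 P2 P3].
pose U := fun p q => [exists d, [&& ~~ Hf f d, (p <= P (predf f d))%N & (P d <= q)%N]].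
have Uup p q p' q' : U p q -> (p' <= p)%N -> (q <= q')%N -> U p' q'.
  case/existsP=> d /and3P [nh l1 l2] h1 h2; apply/existsP; exists d.
  by rewrite nh (leq_trans h1 l1) (leq_trans l2 h2).
have Ult p q : U p q -> (p < q)%N.
  case/existsP=> d /and3P [nh l1 l2].
  exact: leq_ltn_trans l1 (leq_trans (P2 d nh) l2).
case: (realize R n Uup) => y Hy.
pose x := fun a => y (P a).
have dec a b : (P a < P b)%N -> x b < x a.
  by move=> h; case: (Hy _ _ h); case/andP: (Pr b).
have ltx a b : (x a < x b) = (P b < P a)%N.
  case: (ltngtP (P b) (P a)) => h; first exact: dec.
    by apply: negbTE; rewrite -leNgt ltW // dec.
  by rewrite /x h ltxx.
have xinj : injective x.
  move=> a b e; apply: Pinj; case: (ltngtP (P a) (P b)) => // h.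
    by have := dec _ _ h; rewrite e ltxx.
  by have := dec _ _ h; rewrite e ltxx.
exists x.
have posE a : posx x a = P a.
  rewrite /posx.
  have -> : [set k | x a < x k] = [set k | (P k <= (P a).-1)%N].
    by apply/setP=> k; rewrite !inE ltx; case/andP: (Pr a); case: (P a).
  rewrite (card_le_bij Pinj Pr); first by case/andP: (Pr a); case: (P a).
  by case/andP: (Pr a) => _; apply: leq_trans (leq_pred _).
have arcE u v : arcx x u v = (u < v)%N && U (P u) (P v).
  rewrite /arcx; congr (_ && _).
  case: (ltnP (P u) (P v)) => h.
    case: (Hy _ _ h); first by case/andP: (Pr v).
    move=> _ [h1 h2]; case: (boolP (U _ _)) => uu; first exact: h1.
    by apply: negbTE; rewrite -leNgt ltW // h2.
  have nu : ~~ U (P u) (P v) by apply/negP => /Ult; rewrite ltnNge h.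
  rewrite (negbTE nu); apply/negbTE; rewrite -leNgt.
  have le : x u <= x v.
    case: (ltngtP (P v) (P u)) h => // [hh _|hh _]; first exact: ltW (dec _ _ hh).
    by rewrite /x hh.
  by apply: (le_trans _ ler01); rewrite subr_le0.
split => //.
  move=> u v uv; rewrite /x.
  case: (ltngtP (P u) (P v)) => h.
  - case: (Hy _ _ h); first by case/andP: (Pr v).
    move=> _ [h1 h2]; case: (boolP (U (P u) (P v))) => uu.
      by rewrite gt_eqF // h1.
    by rewrite lt_eqF // h2.
  - have := dec _ _ h; rewrite -subr_lt0 => hh.
    by rewrite lt_eqF // (lt_trans hh) // ltr01.
  - by move: uv; rewrite (Pinj _ _ h) ltnn.
have nonnest d d0 : ~~ Hf f d -> ~~ Hf f d0 -> (P (predf f d) <= P (predf f d0))%N ->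
    (P d0 <= P d)%N -> d0 = d.
  move=> nd nd0 l1 l2; case: (eqVneq (predf f d) (predf f d0)) => e.
    have i1 := nonhead_pred nd; have i2 := nonhead_pred nd0; rewrite e in i1.
    exact: isPred_inj i2 i1.
  have lt : (P (predf f d) < P (predf f d0))%N by rewrite ltn_neqAle (inj_eq Pinj) e l1.
  by have := P3 _ _ nd nd0 lt; rewrite ltnNge l2.
have keptE c d : keptx x c d = ~~ Hf f d && (c == predf f d).
  apply/idP/idP.
  - move=> k; have a := keptx_arc k; rewrite arcE in a.
    case/andP: a => _ /existsP [d0 /and3P [nd0 l1 l2]].
    case: (eqVneq (predf f d0, d0) (c, d)) => [[e1 e2]|ne].
      by rewrite -e2 nd0 -e1 eqxx.
    exfalso; apply: (keptxP k _ ne); rewrite ?posE //.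
    rewrite arcE; case/and3P: (nonhead_pred nd0) => _ -> _ /=.
    by apply/existsP; exists d0; rewrite nd0 !leqnn.
  - case/andP => nd /eqP ->; apply/andP; split.
      rewrite arcE; case/and3P: (nonhead_pred nd) => _ -> _ /=.
      by apply/existsP; exists d; rewrite nd !leqnn.
    apply/negP; case/existsP=> j; case/existsP=> k; case/and4P=> ajk ne l1 l2.
    rewrite arcE in ajk; case/andP: ajk => _ /existsP [d0 /and3P [nd0 m1 m2]].
    rewrite !posE in l1 l2.
    have e := nonnest d d0 nd nd0 (leq_trans l1 m1) (leq_trans m2 l2).
    rewrite e in m1 m2.
    have ej : P j = P (predf f d) by apply/eqP; rewrite eqn_leq l1 m1.
    have ek : P k = P d by apply/eqP; rewrite eqn_leq l2 m2.
    by move: ne; rewrite (Pinj _ _ ej) (Pinj _ _ ek) eqxx.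
move=> i; case: (head_exists f i) => h hh fh.
have hx : headx x h by apply/forallP => c; rewrite keptE hh.
have chain_gen : forall k (j : 'I_n), (j < k)%N -> f h = f j -> chainx x j h.
  elim=> // k IH j jk fj.
  case: (boolP (Hf f j)) => hj.
    by rewrite (head_unique hj hh (esym fj)); apply: connect0.
  have ipj := nonhead_pred hj; case/and3P: (ipj) => /eqP fp lp _.
  have c1 : chainx x (predf f j) h by apply: IH; [apply: leq_trans lp jk| rewrite fp].
  apply: chainx_trans c1; apply: connect1.
  by rewrite /adjx (keptE (predf f j) j) hj eqxx orbT.
have ch : chainx x i h by apply: (chain_gen n.+1) => //; apply: leq_trans (ltn_ord i) _.
by rewrite (sigx_head xinj ch hx) posE P1 // fh.
Qed.
End Verif.

From mathcomp Require Import all_classical all_reals all_analysis.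
From mathcomp Require Import ring lra.
Import Order.TTheory GRing.Theory Num.Theory.
Import numFieldTopology.Exports numFieldNormedType.Exports.
Local Open Scope classical_set_scope.


Section Topo.
Variables (R : realType) (n : nat).
Let A := @shi_complement R n.

Lemma conn_side (B : set 'rV[R]_n) (g : 'rV[R]_n -> R) (c : R) x y :
  connected B -> continuous g -> (forall z, B z -> g z != c) -> B x -> B y ->
  (g x < c) = (g y < c).
Proof.
move=> cB gc gne Bx By.
have cgB : connected (g @` B).
  by apply: connected_continuous_connected cB _; apply: continuous_subspaceT.
have iv := (connected_intervalP _).1 cgB.
suff H : forall u v, B u -> B v -> g u < c -> g v < c.
  by apply/idP/idP; apply: H.
move=> u v Bu Bv gu; rewrite ltNge; apply/negP => cv.
have : (g @` B) c.
  apply: (iv (g u) (g v)); [by exists u|by exists v|].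
  by rewrite (ltW gu) cv.
by case=> z Bz gz; move: (gne z Bz); rewrite gz eqxx.
Qed.

Lemma coordB_cont (i j : 'I_n) : continuous (fun z : 'rV[R]_n => Defs.coord z i - Defs.coord z j).
Proof.
move=> z; apply: continuousB; apply: coord_continuous.
Qed.

Lemma comp_signs x y : connected_component A x y ->
  (forall m k : 'I_n, (Defs.coord x m < Defs.coord x k) = (Defs.coord y m < Defs.coord y k)) /\
  (forall i j : 'I_n, (i < j)%N -> (1 < Defs.coord x i - Defs.coord x j) = (1 < Defs.coord y i - Defs.coord y j)).
Proof.
case=> B [Bx BA Bc] By; split.
- move=> m k; case: (ltngtP m k) => h.
  + rewrite -[LHS]subr_lt0 -[RHS]subr_lt0.
    have ne z : B z -> Defs.coord z m - Defs.coord z k != 0.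
      by move=> /BA Az; case: (Az _ _ h).
    exact: (conn_side Bc (@coordB_cont m k) ne Bx By).
  + rewrite -[LHS]subr_lt0 -[RHS]subr_lt0.
    have ne z : B z -> Defs.coord z m - Defs.coord z k != 0.
      by move=> /BA Az; case: (Az _ _ h); rewrite -oppr_eq0 opprB.
    exact: (conn_side Bc (@coordB_cont m k) ne Bx By).
  + by rewrite (val_inj h) !ltxx.
- move=> i j h.
  have ne z : B z -> Defs.coord z i - Defs.coord z j != 1 by move=> /BA /(_ _ _ h) [].
  have e := conn_side Bc (@coordB_cont i j) ne Bx By.
  have h1 z : B z -> (1 < Defs.coord z i - Defs.coord z j) = ~~ (Defs.coord z i - Defs.coord z j < 1).
    by move=> Bz; rewrite lt_neqAle eq_sym (ne z Bz) /= leNgt.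
  by rewrite (h1 _ Bx) (h1 _ By) e.
Qed.

Lemma conv_lt (a b c t : R) : 0 <= t -> t <= 1 -> a < c -> b < c -> (1 - t) * a + t * b < c.
Proof.
move=> t0 t1 ac bc; set M := Num.max a b.
have aM : a <= M by rewrite le_max lexx.
have bM : b <= M by rewrite le_max lexx orbT.
have Mc : M < c by rewrite gt_max ac bc.
have q1 : (1 - t) * a <= (1 - t) * M by apply: ler_wpM2l => //; rewrite subr_ge0.
have q2 : t * b <= t * M by apply: ler_wpM2l.
have q3 : (1 - t) * M + t * M = M by ring.
lra.
Qed.

Lemma conv_gt (a b c t : R) : 0 <= t -> t <= 1 -> c < a -> c < b -> c < (1 - t) * a + t * b.
Proof.
move=> t0 t1 ac bc; set M := Num.min a b.
have aM : M <= a by rewrite ge_min lexx.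
have bM : M <= b by rewrite ge_min lexx orbT.
have Mc : c < M by rewrite lt_min ac bc.
have q1 : (1 - t) * M <= (1 - t) * a by apply: ler_wpM2l => //; rewrite subr_ge0.
have q2 : t * M <= t * b by apply: ler_wpM2l.
have q3 : (1 - t) * M + t * M = M by ring.
lra.
Qed.

Lemma class_comp x y : A x -> A y ->
  (forall m k : 'I_n, (Defs.coord x m < Defs.coord x k) = (Defs.coord y m < Defs.coord y k)) ->
  (forall i j : 'I_n, (i < j)%N -> (1 < Defs.coord x i - Defs.coord x j) = (1 < Defs.coord y i - Defs.coord y j)) ->
  connected_component A x y.
Proof.
move=> Ax Ay H1 H2.
pose S := (fun t : R => x + t *: (y - x)) @` `[0, 1].
have cS : connected S.
  apply: connected_continuous_connected; first exact: segment_connected.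
  apply: continuous_subspaceT => t; apply: cvgD; first exact: cvg_cst.
  by apply: continuousZr_tmp; apply: cvg_id.
have SA : S `<=` A.
  move=> _ [t /= t01 <-] i j h.
  have tt : 0 <= t /\ t <= 1 by move: t01; rewrite in_itv /= => /andP [].
  case: tt => t0 t1.
  have ce : Defs.coord (x + t *: (y - x)) i - Defs.coord (x + t *: (y - x)) j =
      (1 - t) * (Defs.coord x i - Defs.coord x j) + t * (Defs.coord y i - Defs.coord y j).
    by rewrite /Defs.coord !mxE; ring.
  rewrite ce.
  have [xn0 xn1] := Ax _ _ h; have [yn0 yn1] := Ay _ _ h.
  have s0 : (Defs.coord x i - Defs.coord x j < 0) = (Defs.coord y i - Defs.coord y j < 0) by rewrite !subr_lt0 H1.
  have s1 := H2 _ _ h.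
  set a := Defs.coord x i - Defs.coord x j in xn0 xn1 s0 s1 *.
  set b := Defs.coord y i - Defs.coord y j in yn0 yn1 s0 s1 *.
  case: (ltP a 0) => a0.
    have b0 : b < 0 by rewrite -s0.
    have := conv_lt t0 t1 a0 b0 => h0.
    by rewrite lt_eqF // (lt_eqF (lt_trans h0 ltr01)).
  have a0' : 0 < a by rewrite lt_neqAle eq_sym xn0.
  have b0' : 0 < b by rewrite lt_neqAle eq_sym yn0 leNgt -s0 -leNgt.
  case: (boolP (1 < a)) => a1.
    have b1 : 1 < b by rewrite -s1.
    have := conv_gt t0 t1 a1 b1 => h1.
    by rewrite gt_eqF // ?(lt_trans ltr01 h1) // gt_eqF.
  have a1' : a < 1 by rewrite lt_neqAle xn1 leNgt.
  have b1' : b < 1 by rewrite lt_neqAle yn1 leNgt -s1.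
  have := conv_gt t0 t1 a0' b0' => h0.
  have := conv_lt t0 t1 a1' b1' => h1.
  by rewrite gt_eqF // lt_eqF.
have Sx : S x by exists 0; [rewrite /= in_itv /= lexx ler01 | rewrite scale0r addr0].
have Sy : S y by exists 1; [rewrite /= in_itv /= lexx ler01 | rewrite scale1r addrC subrK].
exact: (connected_component_max Sx SA cS).
Qed.
End Topo.


Section Main.
Variables (R : realType) (n : nat).
Let A := @shi_complement R n.

Lemma A_inj x : A x -> injective (Defs.coord x).
Proof.
move=> Ax i j e; case: (ltngtP i j) => h.
- by case: (Ax _ _ h) => ne _; move: ne; rewrite e subrr eqxx.
- by case: (Ax _ _ h) => ne _; move: ne; rewrite e subrr eqxx.
- exact: val_inj.
Qed.

Lemma sigma_comp x : A x -> sigma_shi (connected_component A x) = sigx (Defs.coord x).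
Proof.
move=> Ax; set Rg := connected_component A x.
have Rx : Rg x := connected_component_refl Ax.
have posE : shi_pos Rg = posx (Defs.coord x).
  apply: funext => m; rewrite /shi_pos /posx; congr S; apply: eq_card => k; rewrite [in RHS]inE /=.
  apply/idP/idP => [/[!in_setE] /asboolP H|H]; first exact: H x Rx.
  rewrite in_setE; apply/asboolP => y Ry.
  by have [h1 _] := comp_signs Ry; rewrite -h1.
have arcE : shi_arc Rg = arcx (Defs.coord x).
  apply: funext => i; apply: funext => j; rewrite /shi_arc /arcx.
  case: (ltnP i j) => h //=.
  apply/asboolP/idP => [H|H y Ry]; first exact: H x Rx.
  by have [_ h2] := comp_signs Ry; rewrite -h2.
rewrite /sigma_shi /same_chain /shi_adj /shi_kept_arc posE arcE.
reflexivity.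
Qed.
Lemma pfP (f : {ffun 'I_n -> nat}) : parking_function f <->
  ((forall i, (1 <= f i <= n)%N) /\
   (forall j, (1 <= j <= n)%N -> (j <= #|[set i | (f i <= j)%N]%SET|)%N)).
Proof.
have e j : #|[set i : 'I_n | (f i <= j)%N]| = #|[set i | (f i <= j)%N]%SET|.
  apply: eq_card => i; rewrite [in RHS]inE; apply/idP/idP => [/[!in_setE] //|h].
  by rewrite in_setE.
rewrite /parking_function; split; case=> h1 h2; split => // j /h2; by rewrite e.
Qed.
End Main.

Theorem theorem2p2 (R : realType) (n : nat) (hn : (1 <= n)%N) :
  (forall Rg, @shi_regions R n Rg -> parking_function (sigma_shi Rg)) /\
  (forall Rg1 Rg2, @shi_regions R n Rg1 -> @shi_regions R n Rg2 ->
     sigma_shi Rg1 = sigma_shi Rg2 -> Rg1 = Rg2) /\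
  (forall f : {ffun 'I_n -> nat}, parking_function f ->
     exists2 Rg, @shi_regions R n Rg & sigma_shi Rg = f).
Proof.
split; [|split].
- move=> Rg [x Ax <-]; rewrite sigma_comp //; apply/pfP; exact: sigx_pf (A_inj Ax).
- move=> Rg1 Rg2 [x1 A1 e1] [x2 A2 e2]; rewrite -e1 -e2.
  rewrite (sigma_comp A1) (sigma_comp A2) => e.
  apply: same_connected_component; apply: (class_comp A1 A2).
    by move=> m k; exact: lt_same (A_inj A1) (A_inj A2) e m k.
  by move=> i j h; have := arc_same (A_inj A1) (A_inj A2) e i j; rewrite /arcx h.
- move=> f /pfP [pf1 pf2].
  case: (@surj_point R n (fun i => f i) pf1 pf2) => xf [xinj xne xsig].
  pose x : 'rV[R]_n := \row_i xf i.
  have cx : Defs.coord x = xf by apply: funext => i; rewrite /Defs.coord mxE.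
  have Ax : @shi_complement R n x.
    move=> i j h; rewrite cx; split; last exact: xne.
    rewrite subr_eq0; apply/negP => /eqP /xinj e; by rewrite e ltnn in h.
  exists (connected_component (@shi_complement R n) x); first by exists x.
  by rewrite sigma_comp // cx; apply/ffunP => i; rewrite xsig.
Qed.
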